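(* Let $S$ be a MANS-semigroup with $\mathrm{msg}(S)=\{n_1<n_2<\cdots<n_e<n_{e+1}\}$, where $e\geq 2$. Then $S'=\langle n_1,n_2,\ldots,n_e\rangle$ is a MANS-semigroup with $\mathrm{e}(S')=\mathrm{e}(S)-1$.
   Context: $\mathbb{N}=\{0,1,2,\ldots\}$. A numerical semigroup is a subset $S\subseteq\mathbb{N}$ closed under addition, containing $0$, with $\mathbb{N}\setminus S$ finite; $\langle A\rangle$ is the submonoid generated by $A$; $\mathrm{msg}(S)$ is the unique finite minimal system of generators and $\mathrm{e}(S)=|\mathrm{msg}(S)|$. $S$ is a MANS-semigroup if $w(1)<\cdots<w(\mathrm{m}(S)-1)$, where $\mathrm{m}(S)$ is the least element of $S\setminus\{0\}$ and $w(i)$ the least element of $S$ congruent to $i$ modulo $\mathrm{m}(S)$. *)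

(* Defs.v *)
From mathcomp Require Import all_boot.
Set Implicit Arguments. Unset Strict Implicit. Unset Printing Implicit Defensive.

Definition numerical_semigroup (S : nat -> Prop) : Prop :=
  [/\ S 0,
      (forall x y, S x -> S y -> S (x + y))
    & exists N, forall n, N <= n -> S n].

Definition gen (A : seq nat) (x : nat) : Prop :=
  exists c : nat -> nat, x = \sum_(i < size A) c i * nth 0 A i.

(* A (duplicate-free) is a minimal system of generators of S:
   it generates S and no sublist (subset) of it generates S unless it
   contains all of A. msg(S) is the unique such system. *)
Definition is_msg (S : nat -> Prop) (A : seq nat) : Prop :=
  [/\ uniq A,
      (forall x, gen A x <-> S x)
    & forall B : seq nat, {subset B <= A} ->
        (forall x, gen B x <-> S x) -> {subset A <= B}].

Definition is_multiplicity (S : nat -> Prop) (m : nat) : Prop :=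
  [/\ 0 < m, S m & forall x, S x -> 0 < x -> m <= x].

Definition is_apery_elt (S : nat -> Prop) (m i w : nat) : Prop :=
  [/\ S w, w = i %[mod m] & forall x, S x -> x = i %[mod m] -> w <= x].

Definition MANS (S : nat -> Prop) : Prop :=
  numerical_semigroup S /\
  exists m, is_multiplicity S m /\
    forall i j wi wj, 1 <= i -> i < j -> j <= m - 1 ->
      is_apery_elt S m i wi -> is_apery_elt S m j wj -> wi < wj.

(* Main.v *)
Require Import Defs.
From mathcomp Require Import all_boot.
From Stdlib Require Import Classical FunctionalExtensionality PropExtensionality.
Set Implicit Arguments. Unset Strict Implicit. Unset Printing Implicit Defensive.

Inductive G (A : seq nat) : nat -> Prop :=
| G0 : G A 0
| GS a x : a \in A -> G A x -> G A (a + x).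

Lemma G_add A x y : G A x -> G A y -> G A (x + y).
Proof.
move=> Gx Gy; elim: Gx => [|a x' Ha _ IH]; first by rewrite add0n.
rewrite -addnA; exact: GS Ha IH.
Qed.

Lemma G_mem A a : a \in A -> G A a.
Proof. by move=> Ha; rewrite -[a]addn0; apply: GS Ha (G0 _). Qed.

Lemma G_mul A k x : G A x -> G A (k * x).
Proof. move=> Gx; elim: k => [|k IH]; first by rewrite mul0n; exact: G0.
by rewrite mulSn; apply: G_add. Qed.

Lemma G_mono A B x : {subset A <= B} -> G A x -> G B x.
Proof. move=> sAB; elim=> [|a y Ha _ IH]; first exact: G0. exact: GS (sAB _ Ha) IH. Qed.

Lemma G_inv A x : G A x -> x = 0 \/ exists a y, [/\ a \in A, G A y & x = a + y].
Proof. case=> [|a y Ha Gy]; [by left | right; by exists a, y]. Qed.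

Lemma gen_G A x : gen A x <-> G A x.
Proof.
split.
  case=> c ->; elim: A c => [|a A IH] c; first by rewrite big_ord0; exact: G0.
  rewrite big_ord_recl /=; apply: G_add; first by apply: G_mul; apply: G_mem; rewrite inE eqxx.
  apply: (@G_mono A); first by move=> z zA; rewrite inE zA orbT.
  exact: (IH (fun i => c i.+1)).
elim=> [|a y Ha _ [c Hc]]; first by exists (fun _ => 0); rewrite big1.
have ia : index a A < size A by rewrite index_mem.
exists (fun i => c i + (i == index a A)).
under eq_bigr do rewrite mulnDl.
rewrite big_split /= -Hc addnC; congr (_ + _).
rewrite (bigD1 (Ordinal ia)) //= eqxx mul1n nth_index // big1 ?addn0 // => i.
by rewrite -val_eqE /= => /negbTE ->.
Qed.

Lemma gen_eq A : gen A = G A.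
Proof. apply: functional_extensionality => x; apply: propositional_extensionality; exact: gen_G. Qed.

Lemma min_ex (P : nat -> Prop) x : P x -> exists y, P y /\ forall z, P z -> y <= z.
Proof.
elim/ltn_ind: x => x IH Px.
case: (classic (exists z, P z /\ z < x)) => [[z [Pz lt]]|H]; first exact: IH lt Pz.
exists x; split=> // z Pz; rewrite leqNgt; apply/negP=> lt; apply: H; by exists z.
Qed.

Lemma apery_ex S m i : numerical_semigroup S -> 0 < m -> exists w, is_apery_elt S m i w.
Proof.
case=> _ _ [N HN] m0.
have [|y [[Sy Ey] Hy]] := @min_ex (fun y => S y /\ y = i %[mod m]) (i + N * m).
  split; first by apply: HN; apply: leq_trans (leq_pmulr N m0) (leq_addl _ _).
  by rewrite addnC modnMDl.
by exists y; split => // z Sz Ez; apply: Hy.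
Qed.

Lemma nz_gen A m x : G A x -> x %% m != 0 ->
  exists g, [/\ g \in A, g %% m != 0, g <= x & G A (x - g)].
Proof.
elim=> [|a y Ha Gy IH]; first by rewrite mod0n.
case: (eqVneq (a %% m) 0) => [a0|an0] xn.
  have [|g [gA gn gy Gyg]] := IH.
    by move: xn; rewrite -modnDml a0 add0n.
  exists g; split=> //; first by apply: leq_trans gy (leq_addl _ _).
  by rewrite -addnBA //; apply: GS.
by exists a; split=> //; [apply: leq_addr | rewrite addKn].
Qed.
From mathcomp Require Import zify.
Theorem lemma4p2 (S : nat -> Prop) (e : nat) (n : seq nat) :
  2 <= e ->
  MANS S ->
  is_msg S n ->
  sorted ltn n ->
  size n = e.+1 ->
  MANS (gen (take e n)) /\
  exists B : seq nat, is_msg (gen (take e n)) B /\ size B = (size n).-1.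
Proof.
move=> He [numS [m [[m0 Sm mmin] mans]]] [un genS minS] srt sz.
have GS_ x : G n x <-> S x by rewrite -gen_G; exact: genS.
have nE : n = rcons (take e n) (nth 0 n e).
  by rewrite -take_nth ?sz // -sz take_size.
have AltN a : a \in take e n -> a < nth 0 n e.
  move: srt; rewrite (sorted_pairwise ltn_trans) {1}nE pairwise_rcons => /andP[/allP H _].
  exact: H.
have AinN a : a \in take e n -> a \in n by apply: mem_take.
have removal x : x \in n -> G [seq y <- n | y != x] x -> False.
  move=> xn Gx.
  have H y : gen [seq y <- n | y != x] y <-> S y.
    rewrite gen_G -GS_; split.
      by apply: G_mono => z; rewrite mem_filter => /andP[].
    elim=> [|a y' an _ IH]; first exact: G0.
    case: (eqVneq a x) => [->|ne]; first exact: G_add.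
    by apply: GS => //; rewrite mem_filter ne an.
  have sub : {subset [seq y <- n | y != x] <= n} by move=> z; rewrite mem_filter => /andP[].
  by have := minS _ sub H x xn; rewrite mem_filter eqxx.
have n0 : 0 \notin n by apply/negP => h; apply: (removal 0 h (G0 _)).
have nS g : g \in n -> S g /\ 0 < g.
  move=> gn; split; first by apply/GS_; apply: G_mem.
  by rewrite lt0n; apply/negP => /eqP g0; move: n0; rewrite -g0 gn.
have mn : m \in n.
  have [|[a [y [an Gy my]]]] := G_inv (proj2 (GS_ m) Sm); first by move=> h; move: m0; rewrite h.
  have [Sa a0] := nS a an.
  have h := mmin a Sa a0.
  have y0 : y = 0 by apply/eqP; rewrite -leqn0 -(leq_add2l a) addn0 -my.
  by rewrite my y0 addn0.
have mult g : g \in n -> g != m -> g %% m = 0 -> False.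
  move=> gn gm gmod; apply: (removal g gn).
  have Hm : m \in [seq y <- n | y != g] by rewrite mem_filter (eq_sym m) gm mn.
  have ge : g = (g %/ m) * m by rewrite [in LHS](divn_eq g m) gmod addn0.
  rewrite [X in G _ X]ge.
  exact: G_mul (G_mem Hm).
have [n0' [n1 [rest nE2]]] : exists a b r, n = a :: b :: r.
  move: sz He; case: (n) => [|a [|b r]] /=; [by [] | by case=> <- | by exists a, b, r].
have n01 : n0' < n1 by move: srt; rewrite nE2 /= => /andP[].
have n0n : n0' \in n by rewrite nE2 inE eqxx.
have mn0 : m <= n0' by have [S0 p0] := nS n0' n0n; apply: mmin.
have n1A : n1 \in take e n.
  by rewrite nE2; move: He; case: (e) => [|[|e']] //= _; rewrite !inE eqxx orbT.
have n1m : n1 != m by rewrite neq_ltn (leq_ltn_trans mn0 n01) orbT.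
have m1 : 1 < m.
  rewrite ltn_neqAle eq_sym m0 andbT; apply/negP => /eqP m1.
  by apply: (mult n1 (AinN _ n1A) n1m); rewrite m1 modn1.
have apS i : exists w, is_apery_elt S m i w by apply: apery_ex.
have lowS x : S x -> x < nth 0 n e -> G (take e n) x.
  move=> /GS_; elim=> [|a y an Gy IH] lt; first exact: G0.
  apply: GS; last by apply: IH; apply: leq_ltn_trans lt; apply: leq_addl.
  move: an; rewrite {1}nE mem_rcons inE => /orP[/eqP aN|//].
  by move: lt; rewrite aN ltnNge leq_addr.
have SubS x : G (take e n) x -> S x by move=> Gx; apply/GS_; apply: G_mono AinN Gx.
have [w1 [Sw1 Ew1 Mw1]] := apS 1.
have w1m : w1 %% m = 1 by rewrite Ew1 modn_small.
have w1le x : S x -> x %% m != 0 -> w1 <= x.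
  move=> Sx xm.
  have rlt : x %% m < m := ltn_pmod x m0.
  case: (eqVneq (x %% m) 1) => [x1|xn1].
    by apply: Mw1 => //; rewrite x1 modn_small.
  have [wr [Swr Ewr Mwr]] := apS (x %% m).
  have h1 : 1 < x %% m by lia.
  have h2 : x %% m <= m - 1 by lia.
  have h3 : x = x %% m %[mod m] by rewrite modn_mod.
  exact: leq_trans (ltnW (mans 1 (x %% m) w1 wr (isT : 0 < 1) h1 h2 (And3 Sw1 Ew1 Mw1) (And3 Swr Ewr Mwr))) (Mwr x Sx h3).
have w1N : w1 < nth 0 n e.
  rewrite ltnNge; apply/negP => Nw.
  apply: (mult n1 (AinN _ n1A) n1m); apply/eqP; apply/negPn/negP => h.
  have := w1le n1 (proj1 (nS _ (AinN _ n1A))) h.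
  move: (AltN _ n1A) Nw; lia.
have GAw1 := lowS w1 Sw1 w1N.
have GAm : G (take e n) m.
  apply: (lowS m Sm); have := AltN _ n1A; lia.
rewrite !gen_eq.
have numS' : numerical_semigroup (G (take e n)).
  split; [exact: G0 | exact: G_add | ].
  exists (m * w1) => x hx.
  set r := x %% m.
  have rw : r * w1 <= x by apply: leq_trans hx; rewrite leq_mul2r (ltnW (ltn_pmod _ m0)) orbT.
  have ymod : (x - r * w1) %% m = 0.
    have: (x - r*w1) + r*w1 = 0 + r*w1 %[mod m].
      by rewrite subnK // add0n -modnMmr w1m muln1 /r modn_mod.
    by move/eqP; rewrite eqn_modDr mod0n => /eqP.
  rewrite -(subnK rw) [X in X + _](divn_eq _ m) ymod addn0.
  by apply: G_add; apply: G_mul.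
have multS' : is_multiplicity (G (take e n)) m by split=> // x Gx x0; apply: mmin (SubS _ Gx) x0.
have apS' i : exists w, is_apery_elt (G (take e n)) m i w by apply: apery_ex.
have step j wj wj1 : 0 < j -> j.+1 <= m - 1 -> is_apery_elt (G (take e n)) m j wj ->
   is_apery_elt (G (take e n)) m j.+1 wj1 -> wj < wj1.
  move=> j0 jm [_ _ Mj] [Gj1 Ej1 _].
  have j1mod : wj1 %% m = j.+1 by rewrite Ej1 modn_small //; move: jm; clear; lia.
  have [|g [gA gm gle Gr]] := nz_gen (m:=m) Gj1; first by rewrite j1mod.
  have [v [Gv vmod vg]] : exists v, [/\ G (take e n) v, (v + 1) %% m = g %% m & v < g].
    case: (eqVneq (g %% m) 1) => [r1|rn1].
      exists 0; split; [exact: G0 | by rewrite r1 add0n modn_small | ].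
      rewrite lt0n; apply: contraNneq gm => ->; by rewrite mod0n.
    have rlt : g %% m < m by apply: ltn_pmod.
    have r2 : 1 < g %% m by move: gm rn1; case: (g %% m) => [|[|r]].
    have [wa [Swa Ewa Mwa]] := apS (g %% m).-1.
    have [wb [Swb Ewb Mwb]] := apS (g %% m).
    have wab : wa < wb.
      apply: (mans (g %% m).-1 (g %% m) wa wb); try (move: r2 rlt; clear; lia);
        by split.
    have wbg : wb <= g by apply: Mwb; [exact: SubS _ (G_mem gA) | by rewrite modn_mod].
    exists wa; split.
    - apply: (lowS wa Swa); have := AltN _ gA; move: wab wbg; clear; lia.
    - rewrite -modnDml Ewa modnDml addn1 prednK ?modn_mod //; move: r2; clear; lia.
    - move: wab wbg; clear; lia.
  apply: leq_ltn_trans (Mj (v + (wj1 - g)) (G_add Gv Gr) _) _; last by move: vg gle; clear; lia.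
  have: v + (wj1 - g) + 1 = j + 1 %[mod m].
    rewrite addnAC -modnDml vmod modnDml subnKC // j1mod addn1 modn_small //; move: jm; clear; lia.
  by move/eqP; rewrite eqn_modDr => /eqP.
split.
  split => //; exists m; split => // i j wi wj i0 ij jm Hi Hj.
  elim: j ij jm wj Hj => [//|j IH] ij jm wj Hj.
  rewrite ltnS leq_eqVlt in ij; case/orP: ij => [/eqP ij | ij].
    by subst j; exact: step Hi Hj.
  have [wj' Hj'] := apS' j.
  have jm' : j <= m - 1 by move: jm; clear; lia.
  have j0 : 0 < j by move: i0 ij; clear; lia.
  exact: ltn_trans (IH ij jm' wj' Hj') (step j wj' wj j0 jm Hj' Hj).
exists (take e n); split; last by rewrite size_takel ?sz.
split; [exact: take_uniq | by move=> x; rewrite gen_G | ].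
move=> B sB HB a aA.
case: (boolP (a \in B)) => // aB; exfalso.
apply: (removal a (AinN _ aA)).
have: G B a by apply/gen_G/HB; apply: G_mem.
apply: G_mono => z zB; rewrite mem_filter AinN ?sB // andbT.
by apply: contraNneq aB => <-.
Qed.
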